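(* Let $p\ge 2$ be an integer, set $q=\lfloor p/2\rfloor$, let $G$ be a graph and $v$ a vertex of $G$ of degree $d(v)$. Then (i) $\mathrm{id}^{\leq p}(G)\le \mathrm{id}^{\leq p}(G-v)+\left\lceil\frac{d(v)}{p-1}\right\rceil$; and (ii) if $d(v)\ge q$, then $\mathrm{id}^{\leq p}(G)\le \mathrm{id}^{\leq p}(G-v)+\left\lfloor \frac{d(v)}{q}\right\rfloor$.
   Context: All graphs are finite and simple. For an oriented graph $D$ and $X\subseteq V(D)$, the inversion of $X$ reverses every arc with both endvertices in $X$; a $(\leq p)$-inversion is the inversion of a set of at most $p$ vertices. $\mathrm{id}^{\leq p}(G)$ is the maximum, over all ordered pairs $(\vec G_1,\vec G_2)$ of orientations of $G$, of the minimum number of $(\leq p)$-inversions transforming $\vec G_1$ into $\vec G_2$. *)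

(* Defs.v *)
From mathcomp Require Import all_boot.
Set Implicit Arguments. Unset Strict Implicit. Unset Printing Implicit Defensive.

(* A finite simple graph: vertex type T : finType, adjacency e : rel T,
   assumed symmetric and irreflexive (hypotheses of the theorem).
   We consider induced subgraphs G[V] for V : {set T}; G - v is G[[set: T] :\ v]. *)

Definition is_orientation (T : finType) (e : rel T) (V : {set T}) (o : rel T) : Prop :=
  forall x y,
    (o x y -> [&& x \in V, y \in V & e x y]) /\
    (x \in V -> y \in V -> e x y -> o x y = ~~ o y x).

Definition invert (T : finType) (X : {set T}) (o : rel T) : rel T :=
  fun x y => if (x \in X) && (y \in X) then o y x else o x y.

Definition apply_inversions (T : finType) (s : seq {set T}) (o : rel T) : rel T :=
  foldl (fun o' X => invert X o') o s.

Definition inv_reach (T : finType) (p : nat) (V : {set T}) (o1 o2 : rel T) (k : nat) : Prop :=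
  exists s : seq {set T},
    size s <= k /\
    all (fun X : {set T} => (X \subset V) && (#|X| <= p)) s /\
    (forall x y, apply_inversions s o1 x y = o2 x y).

(* id_le e p V k  <->  id^{<= p}(G[V]) <= k, i.e. for every ordered pair of
   orientations of G[V], the minimum number of (<= p)-inversions needed to
   transform the first into the second is at most k. *)
Definition id_le (T : finType) (e : rel T) (p : nat) (V : {set T}) (k : nat) : Prop :=
  forall o1 o2 : rel T, is_orientation e V o1 -> is_orientation e V o2 ->
    inv_reach p V o1 o2 k.

Definition degree (T : finType) (e : rel T) (v : T) : nat := #|[set u | e v u]|.

(* Main.v *)
Require Import Defs.
From mathcomp Require Import all_boot zify.
Set Implicit Arguments. Unset Strict Implicit.

Lemma AI (T : finType) (s : seq {set T}) (o : rel T) x y :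
  apply_inversions s o x y =
  if odd (count (fun X : {set T} => (x \in X) && (y \in X)) s) then o y x else o x y.
Proof.
elim: s o => [|X s IH] o //=.
rewrite /apply_inversions /= -/(apply_inversions s (invert X o)) IH /invert.
case: (x \in X); case: (y \in X); rewrite /= ?add1n ?add0n /=; by case: (odd _).
Qed.

Lemma sub_size (T : finType) (D : {set T}) k : k <= #|D| ->
  exists S : {set T}, S \subset D /\ #|S| = k.
Proof.
elim: k => [|k IH] hk.
  by exists set0; rewrite sub0set cards0.
have [S [sSD cS]] := IH (ltnW hk).
have : S \proper D by rewrite properEcard sSD cS.
case/properP => _ [x xD xS].
exists (x |: S); split; first by rewrite subUset sub1set xD.
by rewrite cardsU1 xS cS.
Qed.

Lemma chunks (T : finType) (m : nat) (hm : 0 < m) n (D : {set T}) :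
  #|D| <= n * m -> exists Ss : seq {set T}, size Ss <= n /\
   all (fun S : {set T} => (S \subset D) && (#|S| <= m)) Ss /\
   forall u, count (fun S : {set T} => u \in S) Ss = (u \in D).
Proof.
elim: n D => [|n IH] D hD.
  exists [::]; split => //; split => // u /=.
  move: hD; rewrite mul0n leqn0 cards_eq0 => /eqP ->; by rewrite in_set0.
have [S [sSD cS]] := @sub_size _ D (minn m #|D|) (geq_minr _ _).
have hD' : #|D :\: S| <= n * m.
  rewrite cardsD (setIidPr sSD) cS; move: hD; rewrite mulSn. lia.
have [Ss [h1 [h2 h3]]] := IH _ hD'.
exists (S :: Ss); split => //; split.
  rewrite /= sSD cS geq_minl /=.
  apply/allP => X XS; move/allP: h2 => /(_ X XS) /andP [sX ->].
  by rewrite (subset_trans sX) // subsetDl.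
move=> u /=; rewrite h3 in_setD.
case uS: (u \in S) => /=; last by [].
by rewrite (subsetP sSD).
Qed.

Lemma orient_inv (T : finType) (e : rel T) (e_sym : symmetric e) V (s : seq {set T}) o :
  is_orientation e V o -> is_orientation e V (apply_inversions s o).
Proof.
move=> ho x y; rewrite !AI.
have Hc : count (fun X : {set T} => (y \in X) && (x \in X)) s =
          count (fun X : {set T} => (x \in X) && (y \in X)) s.
  by apply: eq_count => X; rewrite andbC.
rewrite Hc; case: (odd _); split.
- move=> hyx; have := proj1 (ho y x) hyx; case/and3P => a b c.
  by rewrite a b (e_sym x y) c.
- move=> xV yV exy; have h := proj2 (ho y x) yV xV.
  by rewrite h ?negbK // (e_sym y x).
- exact: (proj1 (ho x y)).
- exact: (proj2 (ho x y)).
Qed.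

Lemma ceil_le d p : 2 <= p -> d <= (d + (p - 2)) %/ (p - 1) * (p - 1).
Proof.
move=> hp; have hpm : 0 < p - 1 by lia.
have E := divn_eq (d + (p - 2)) (p - 1).
have L := ltn_pmod (d + (p - 2)) hpm.
move: E L; generalize ((d + (p - 2)) %/ (p - 1)) ((d + (p - 2)) %% (p - 1)) => a r.
generalize (a * (p - 1)) => b. lia.
Qed.

Lemma partI (T : finType) (e : rel T)
    (e_sym : symmetric e) (e_irr : irreflexive e)
    (p : nat) (hp : 2 <= p) (v : T) k :
  id_le e p ([set: T] :\ v) k ->
     id_le e p [set: T] (k + (degree e v + (p - 2)) %/ (p - 1)).
Proof.
move=> hid o1 o2 ho1 ho2.
set V' := [set: T] :\ v.
set n := (degree e v + (p - 2)) %/ (p - 1).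
set D := [set u | e v u && (o1 v u != o2 v u)].
have hpm : 0 < p - 1 by lia.
have cD : #|D| <= n * (p - 1).
  have : #|D| <= degree e v.
    apply: subset_leq_card; apply/subsetP => u; rewrite !inE; by case/andP.
  move=> h; apply: (leq_trans h); exact: ceil_le.
have [Ss [h1 [h2 h3]]] := chunks hpm cD.
set o1' : rel T := fun x y => [&& x \in V', y \in V' & o1 x y].
set o2' : rel T := fun x y => [&& x \in V', y \in V' & o2 x y].
have ho1' : is_orientation e V' o1'.
  move=> x y; split; first by rewrite /o1' => /and3P [-> -> /(proj1 (ho1 x y)) /and3P [_ _ ->]].
  by move=> xV yV exy; rewrite /o1' xV yV /=; apply: (proj2 (ho1 x y)); rewrite ?inE.
have ho2' : is_orientation e V' o2'.
  move=> x y; split; first by rewrite /o2' => /and3P [-> -> /(proj1 (ho2 x y)) /and3P [_ _ ->]].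
  by move=> xV yV exy; rewrite /o2' xV yV /=; apply: (proj2 (ho2 x y)); rewrite ?inE.
have ho2s := orient_inv e_sym Ss ho2'.
have [s [s1 [s2 s3]]] := hid _ _ ho1' ho2s.
exists (s ++ [seq v |: Y | Y <- Ss]); split.
  by rewrite size_cat size_map leq_add.
split.
  rewrite all_cat; apply/andP; split.
    by apply/allP => X /(allP s2) /andP [_ ->]; rewrite subsetT.
  apply/allP => X /mapP [Y /(allP h2) /andP [_ cS] ->].
  rewrite subsetT /= cardsU1; move: cS; case: (v \notin Y) => /=; lia.
move=> x y.
rewrite /apply_inversions foldl_cat -!/(apply_inversions _ _) AI !AI.
have cs0 : forall a b, (a == v) || (b == v) ->
    count (fun X : {set T} => (a \in X) && (b \in X)) s = 0.
  move=> a b hab; apply/eqP; rewrite -leqn0 leqNgt -has_count; apply/hasP => [[X Xs]].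
  move/(allP s2): Xs => /andP [/subsetP sX _] /andP [aX bX].
  by case/orP: hab => /eqP E; subst; [move: (sX _ aX) | move: (sX _ bX)]; rewrite !inE eqxx.
have csL : forall b, count (fun X : {set T} => (v \in X) && (b \in X)) s = 0.
  by move=> b; apply: cs0; rewrite eqxx.
have csR : forall b, count (fun X : {set T} => (b \in X) && (v \in X)) s = 0.
  by move=> b; apply: cs0; rewrite eqxx orbT.
have ovv : forall o : rel T, is_orientation e [set: T] o -> o v v = false.
  move=> o ho; apply/negP => /(proj1 (ho v v)) /and3P [_ _]; by rewrite e_irr.
have oz : forall o : rel T, is_orientation e [set: T] o -> forall a b, e a b = false -> o a b = false.
  move=> o ho a b hab; apply/negP => /(proj1 (ho a b)) /and3P [_ _]; by rewrite hab.
have cv : forall u, u != v -> count (fun X : {set T} => (v \in X) && (u \in X))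
     [seq v |: Y | Y <- Ss] = (u \in D).
  move=> u uv; rewrite count_map -h3; apply: eq_count => Y /=.
  by rewrite !inE eqxx (negbTE uv).
have cv' : forall u, u != v -> count (fun X : {set T} => (u \in X) && (v \in X))
     [seq v |: Y | Y <- Ss] = (u \in D).
  move=> u uv; rewrite -cv //; apply: eq_count => X; by rewrite andbC.
case: (eqVneq x v) => [Exv|xv].
  subst x.
  rewrite csL csR /=.
  case: (eqVneq y v) => [Eyv|yv].
    by subst y; rewrite if_same (ovv _ ho1) (ovv _ ho2).
  rewrite cv // /D inE.
  case eyv: (e v y) => /=.
    have h : o1 y v = ~~ o1 v y.
      apply: (proj2 (ho1 y v)); by rewrite ?inE // e_sym eyv.
    rewrite h; by case: (o1 v y); case: (o2 v y).
  by rewrite (oz _ ho1 _ _ eyv) (oz _ ho2 _ _ eyv).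
case: (eqVneq y v) => [Eyv|yv].
  subst y.
  rewrite csL csR /= cv' // /D inE.
  case exv: (e v x) => /=.
    have h : o1 x v = ~~ o1 v x.
      apply: (proj2 (ho1 x v)); by rewrite ?inE // e_sym exv.
    have h' : o2 x v = ~~ o2 v x.
      apply: (proj2 (ho2 x v)); by rewrite ?inE // e_sym exv.
    rewrite h h'; by case: (o1 v x); case: (o2 v x).
  have exv' : e x v = false by rewrite e_sym.
  by rewrite (oz _ ho1 _ _ exv') (oz _ ho2 _ _ exv').
have Ec : count (fun X : {set T} => (x \in X) && (y \in X)) [seq v |: Y | Y <- Ss] =
          count (fun X : {set T} => (x \in X) && (y \in X)) Ss.
  rewrite count_map; apply: eq_count => Y /=; by rewrite !inE (negbTE xv) (negbTE yv).
have xV : x \in V' by rewrite !inE xv.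
have yV : y \in V' by rewrite !inE yv.
have E1 : forall a b, a \in V' -> b \in V' ->
   (if odd (count (fun X : {set T} => (a \in X) && (b \in X)) s) then o1 b a else o1 a b)
   = apply_inversions Ss o2' a b.
  move=> a b aV bV; rewrite -s3 AI /o1' aV bV //.
rewrite Ec (E1 _ _ xV yV) (E1 _ _ yV xV) !AI.
have Hc : count (fun X : {set T} => (y \in X) && (x \in X)) Ss =
          count (fun X : {set T} => (x \in X) && (y \in X)) Ss.
  by apply: eq_count => X; rewrite andbC.
rewrite Hc /o2' xV yV; by case: (odd _).
Qed.

Lemma arith d p : 2 <= p -> p./2 <= d -> (d + (p - 2)) %/ (p - 1) <= d %/ p./2.
Proof.
move=> hp hd.
have hq : 0 < p./2 by move: hp; clear hd; case: p => [|[|p]].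
have hpm : 0 < p - 1 by lia.
rewrite -ltnS ltn_divLR //.
have E := divn_eq d p./2; have L := ltn_pmod d hq.
have A : 1 <= d %/ p./2 by rewrite divn_gt0.
have O := odd_double_half p.
move: E L A O hq hd hp; rewrite -muln2.
generalize (odd p) => b. generalize p./2 => q. generalize (d %/ q) => a. generalize (d %% q) => r.
move=> E L A O hq hd hp.
have P : p = b + q * 2 by lia.
subst p d.
have H1 : r <= a * (q - 1).
  apply: (leq_trans (_ : r <= q - 1)); first lia.
  by rewrite -{1}(mul1n (q - 1)) leq_mul2r A orbT.
have H2 : a * (q - 1) = a * q - a by rewrite mulnBr muln1.
have H3 : a <= a * q by rewrite -{1}(muln1 a) leq_mul2l hq orbT.
rewrite mulSn mulnBr muln1 mulnDr.
have H4 : a <= a * (q * 2) by rewrite -{1}(muln1 a) leq_mul2l; apply/orP; right; lia.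
move: H1 H2 H3 H4; rewrite (mulnA a q 2).
generalize (a * q) => aq; clear hpm P; case: b hp => /=; lia.
Qed.

Lemma id_mono (T : finType) (e : rel T) p V k1 k2 : k1 <= k2 -> id_le e p V k1 -> id_le e p V k2.
Proof.
move=> hk h o1 o2 h1 h2; have [s [? ?]] := h o1 o2 h1 h2; exists s; split => //; lia.
Qed.

Theorem mainTheorem13 (T : finType) (e : rel T)
    (e_sym : symmetric e) (e_irr : irreflexive e)
    (p : nat) (hp : 2 <= p) (v : T) :
  (forall k : nat, id_le e p ([set: T] :\ v) k ->
     id_le e p [set: T] (k + (degree e v + (p - 2)) %/ (p - 1)))
  /\
  (p./2 <= degree e v ->
   forall k : nat, id_le e p ([set: T] :\ v) k ->
     id_le e p [set: T] (k + degree e v %/ p./2)).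
Proof.
split; first by move=> k; exact: partI.
move=> hd k hk; apply: (id_mono _ (partI e_sym e_irr hp hk)).
by rewrite leq_add2l arith.
Qed.
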